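(* For $(a,b)\in\{-,+\}^2$ let $f_{ab}(\pi)=F(\pi,\mu_a,\sigma_b)$. Then $$\min_{\pi\in\mathbb R}\max_{(\mu,\sigma)\in D}F(\pi,\mu,\sigma)=\min_{\pi\in\mathbb R}\max_{(a,b)\in\{-,+\}^2}f_{ab}(\pi)=\max_{\{(a,b),(c,d)\}}\ \min_{\pi\in\mathbb R}\max\big(f_{ab}(\pi),f_{cd}(\pi)\big),$$ where the last maximum is over all pairs of distinct corners $(a,b)\neq(c,d)$ in $\{-,+\}^2$.
   Context: Let $0<\mu_-<\mu_+$ and $0<\sigma_-<\sigma_+$ be real numbers, $D=[\mu_-,\mu_+]\times[\sigma_-,\sigma_+]$, and $h_0,h_1\in\mathbb R$. For $\pi\in\mathbb R$ and $(\mu,\sigma)\in D$ put $F(\pi,\mu,\sigma)=(h_0-\pi\mu)^2+(h_1-\pi\sigma)^2$. *)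

(* Defs.v *)
From Stdlib Require Import Reals.
Open Scope R_scope.

Definition F (h0 h1 p mu sigma : R) : R :=
  (h0 - p * mu) ^ 2 + (h1 - p * sigma) ^ 2.

Definition is_max (P : R -> Prop) (m : R) : Prop :=
  P m /\ forall x, P x -> x <= m.

Definition is_min (P : R -> Prop) (m : R) : Prop :=
  P m /\ forall x, P x -> m <= x.

(* corner selector: true = "+", false = "-" *)
Definition sel (b : bool) (lo hi : R) : R := if b then hi else lo.

Definition fcorner (h0 h1 mum mup sgm sgp : R) (ab : bool * bool) (p : R) : R :=
  F h0 h1 p (sel (fst ab) mum mup) (sel (snd ab) sgm sgp).

Definition fmax4 (h0 h1 mum mup sgm sgp p : R) : R :=
  let f := fun ab => fcorner h0 h1 mum mup sgm sgp ab p in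
  Rmax (Rmax (f (false, false)) (f (false, true)))
       (Rmax (f (true, false)) (f (true, true))).

Definition valsD (h0 h1 mum mup sgm sgp p : R) : R -> Prop :=
  fun v => exists mu sigma, mum <= mu <= mup /\ sgm <= sigma <= sgp /\
                            v = F h0 h1 p mu sigma.

(* Main.v *)
Require Import Defs.
From Stdlib Require Import Reals Lra Psatz Classical FunctionalExtensionality.
Open Scope R_scope.

Lemma Rmax_alt a b : Rmax a b = (a + b + Rabs (a - b)) / 2.
Proof. unfold Rmax; destruct Rle_dec; unfold Rabs; destruct Rcase_abs; lra. Qed.

Lemma cont_Rmax f g x : continuity_pt f x -> continuity_pt g x ->
  continuity_pt (fun p => Rmax (f p) (g p)) x.
Proof.
  intros Hf Hg.
  replace (fun p => Rmax (f p) (g p)) with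
    (fun p => (f p + g p + comp Rabs (fun q => f q - g q) p) * / 2).
  2:{ apply functional_extensionality; intro p; rewrite Rmax_alt; unfold comp; lra. }
  apply continuity_pt_mult; [|apply continuity_pt_const; intros u v; reflexivity].
  apply continuity_pt_plus; [apply continuity_pt_plus; auto|].
  apply continuity_pt_comp; [apply continuity_pt_minus; auto| apply Rcontinuity_abs].
Qed.

Lemma cont_fc h0 h1 a b c d ab x : continuity_pt (fcorner h0 h1 a b c d ab) x.
Proof. unfold fcorner, F. reg. Qed.

Lemma min_exists (h : R -> R) : (forall x, continuity_pt h x) ->
  (exists R0, 0 <= R0 /\ forall x, R0 < Rabs x -> h 0 <= h x) ->
  exists p, forall x, h p <= h x.
Proof.
  intros Hc [R0 [HR HR0]].
  destruct (continuity_ab_min h (-R0) R0) as [m [Hm Hm2]]; [lra|auto|].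
  exists m; intro x.
  destruct (Rle_dec (Rabs x) R0).
  - apply Hm. unfold Rabs in *; destruct Rcase_abs; lra.
  - apply Rle_trans with (h 0); [apply Hm; lra| apply HR0; lra].
Qed.

Lemma coerc h0 h1 mum mup sgm sgp ab K : 0 < sgm -> sgm < sgp ->
  exists R0, 0 <= R0 /\ forall x, R0 < Rabs x -> K <= fcorner h0 h1 mum mup sgm sgp ab x.
Proof.
  intros H1 H2.
  exists ((Rabs h1 + Rabs K + 1) / sgm). split.
  { apply Rmult_le_pos; [pose proof (Rabs_pos h1); pose proof (Rabs_pos K); lra|].
    left; apply Rinv_0_lt_compat; lra. }
  intros x Hx. unfold fcorner, F.
  set (s := sel (snd ab) sgm sgp).
  assert (Hs : sgm <= s) by (unfold s, sel; destruct (snd ab); lra).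
  assert (Hx2 : Rabs h1 + Rabs K + 1 < Rabs x * sgm).
  { apply (Rmult_lt_compat_r sgm) in Hx; [|lra].
    unfold Rdiv in Hx; rewrite Rmult_assoc, Rinv_l in Hx; lra. }
  assert (Hxs : Rabs x * sgm <= Rabs (x * s)).
  { rewrite Rabs_mult, (Rabs_pos_eq s) by lra. apply Rmult_le_compat_l; [apply Rabs_pos|lra]. }
  assert (Ht : Rabs (x*s) - Rabs h1 <= Rabs (h1 - x * s)).
  { pose proof (Rabs_triang (h1 - x*s) (-h1)). replace (h1 - x*s + - h1) with (-(x*s)) in H by ring.
    rewrite Rabs_Ropp, Rabs_Ropp in H. lra. }
  pose proof (Rabs_pos K). pose proof (Rle_abs K).
  assert (Hy : Rabs K + 1 <= Rabs (h1 - x*s)) by lra.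
  assert (K <= (h1 - x*s)^2).
  { assert (E: (h1 - x*s)^2 = Rabs (h1 - x*s) * Rabs (h1 - x*s)).
    { rewrite <- Rabs_mult. rewrite Rabs_pos_eq; [ring|]. apply Rle_0_sqr. }
    rewrite E. nra. }
  pose proof (pow2_ge_0 (h0 - x * sel (fst ab) mum mup)). lra.
Qed.

Definition qc (f : R -> R) := forall a x b, a <= x <= b -> f x <= Rmax (f a) (f b).

Lemma conv_sq c m a x b : a <= x <= b ->
  (b - a) * (c - x*m)^2 <= (b - x) * (c - a*m)^2 + (x - a) * (c - b*m)^2.
Proof.
  intros H.
  assert (E : (b - x) * (c - a*m)^2 + (x - a) * (c - b*m)^2 - (b - a) * (c - x*m)^2
     = m^2 * ((x - a) * (b - x) * (b - a))) by ring.
  assert (0 <= m^2 * ((x - a) * (b - x) * (b - a))).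
  { apply Rmult_le_pos; [apply pow2_ge_0|]. apply Rmult_le_pos; [apply Rmult_le_pos|]; lra. }
  lra.
Qed.

Lemma qc_of_conv (f : R -> R) :
  (forall a x b, a <= x <= b -> (b - a) * f x <= (b - x) * f a + (x - a) * f b) -> qc f.
Proof.
  intros H a x b Hx.
  destruct (Req_dec a b) as [E|E].
  - subst. replace x with b by lra. unfold Rmax; destruct Rle_dec; lra.
  - pose proof (H a x b Hx). pose proof (Rmax_l (f a) (f b)). pose proof (Rmax_r (f a) (f b)).
    set (M := Rmax (f a) (f b)) in *.
    assert ((b - a) * f x <= (b - a) * M) by nra.
    apply Rmult_le_reg_l in H3; lra.
Qed.

Lemma qc_fc h0 h1 a b c d ab : qc (fcorner h0 h1 a b c d ab).
Proof.
  apply qc_of_conv. intros u x v Hx. unfold fcorner, F.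
  pose proof (conv_sq h0 (sel (fst ab) a b) u x v Hx).
  pose proof (conv_sq h1 (sel (snd ab) c d) u x v Hx). nra.
Qed.

Lemma qc2 f V a b x : qc f -> f a < V -> f b < V -> a <= x <= b -> f x < V.
Proof. intros Q Ha Hb Hx. eapply Rle_lt_trans; [apply (Q a x b Hx)|]. apply Rmax_lub_lt; auto. Qed.

Lemma qc3 f V a b c x : qc f -> f a < V -> f b < V -> f c < V ->
  (a <= x \/ b <= x \/ c <= x) -> (x <= a \/ x <= b \/ x <= c) -> f x < V.
Proof.
  intros Q Ha Hb Hc H1 H2.
  destruct H1 as [H1|[H1|H1]]; destruct H2 as [H2|[H2|H2]];
  first [solve [apply (qc2 f V a a x); auto] | solve [apply (qc2 f V a b x); auto] | solve [apply (qc2 f V a c x); auto] | solve [apply (qc2 f V b a x); auto] | solve [apply (qc2 f V b b x); auto] | solve [apply (qc2 f V b c x); auto] | solve [apply (qc2 f V c a x); auto] | solve [apply (qc2 f V c b x); auto] | solve [apply (qc2 f V c c x); auto]].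
Qed.

Definition max3 a b c := Rmax (Rmax a b) c.
Lemma max3_ge a b c : a <= max3 a b c /\ b <= max3 a b c /\ c <= max3 a b c.
Proof. unfold max3, Rmax; repeat destruct Rle_dec; lra. Qed.
Lemma max3_le a b c x : x <= max3 a b c -> x <= a \/ x <= b \/ x <= c.
Proof. unfold max3, Rmax; repeat destruct Rle_dec; lra. Qed.
Lemma min4_cases a b c d : let m := Rmin (Rmin a b) (Rmin c d) in
  (m = a \/ m = b \/ m = c \/ m = d) /\ m <= a /\ m <= b /\ m <= c /\ m <= d.
Proof. unfold Rmin; repeat destruct Rle_dec; lra. Qed.

Lemma helly f1 f2 f3 f4 V p12 p13 p14 p23 p24 p34 :
  qc f1 -> qc f2 -> qc f3 -> qc f4 ->
  f1 p12 < V -> f2 p12 < V -> f1 p13 < V -> f3 p13 < V -> f1 p14 < V -> f4 p14 < V ->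
  f2 p23 < V -> f3 p23 < V -> f2 p24 < V -> f4 p24 < V -> f3 p34 < V -> f4 p34 < V ->
  exists x, f1 x < V /\ f2 x < V /\ f3 x < V /\ f4 x < V.
Proof.
  intros Q1 Q2 Q3 Q4 *.
  pose proof (max3_ge p12 p13 p14). pose proof (max3_ge p12 p23 p24).
  pose proof (max3_ge p13 p23 p34). pose proof (max3_ge p14 p24 p34).
  set (u1 := max3 p12 p13 p14) in *. set (u2 := max3 p12 p23 p24) in *.
  set (u3 := max3 p13 p23 p34) in *. set (u4 := max3 p14 p24 p34) in *.
  destruct (min4_cases u1 u2 u3 u4) as [Hc [L1 [L2 [L3 L4]]]].
  set (x := Rmin (Rmin u1 u2) (Rmin u3 u4)) in *.
  exists x.
  repeat split.
  - apply (qc3 f1 V p12 p13 p14); auto; [destruct Hc as [E|[E|[E|E]]]; rewrite E; first [left; lra | right; left; lra | right; right; lra] | apply max3_le; auto].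
  - apply (qc3 f2 V p12 p23 p24); auto; [destruct Hc as [E|[E|[E|E]]]; rewrite E; first [left; lra | right; left; lra | right; right; lra] | apply max3_le; auto].
  - apply (qc3 f3 V p13 p23 p34); auto; [destruct Hc as [E|[E|[E|E]]]; rewrite E; first [left; lra | right; left; lra | right; right; lra] | apply max3_le; auto].
  - apply (qc3 f4 V p14 p24 p34); auto; [destruct Hc as [E|[E|[E|E]]]; rewrite E; first [left; lra | right; left; lra | right; right; lra] | apply max3_le; auto].
Qed.

Lemma sq_max c m a x b : a <= x <= b -> (c - m*x)^2 <= Rmax ((c - m*a)^2) ((c - m*b)^2).
Proof.
  intro H. apply (qc_of_conv (fun t => (c - m*t)^2)); auto.
  intros u y v Hy. rewrite !(Rmult_comm m). apply conv_sq; auto.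
Qed.

Lemma fmax4_unfold h0 h1 mum mup sgm sgp p :
  fmax4 h0 h1 mum mup sgm sgp p =
  Rmax (Rmax (F h0 h1 p mum sgm) (F h0 h1 p mum sgp))
       (Rmax (F h0 h1 p mup sgm) (F h0 h1 p mup sgp)).
Proof. reflexivity. Qed.

Lemma fc_le h0 h1 mum mup sgm sgp ab p :
  fcorner h0 h1 mum mup sgm sgp ab p <= fmax4 h0 h1 mum mup sgm sgp p.
Proof.
  rewrite fmax4_unfold. destruct ab as [[|] [|]]; unfold fcorner; simpl;
  unfold Rmax; repeat destruct Rle_dec; lra.
Qed.

Lemma box h0 h1 mum mup sgm sgp p mu s : mum <= mu <= mup -> sgm <= s <= sgp ->
  F h0 h1 p mu s <= fmax4 h0 h1 mum mup sgm sgp p.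
Proof.
  intros Hm Hs. rewrite fmax4_unfold. unfold F.
  pose proof (sq_max h0 p _ _ _ Hm). pose proof (sq_max h1 p _ _ _ Hs).
  revert H H0. unfold Rmax; repeat destruct Rle_dec; lra.
Qed.

Lemma pmax h0 h1 mum mup sgm sgp p : mum < mup -> sgm < sgp ->
  is_max (valsD h0 h1 mum mup sgm sgp p) (fmax4 h0 h1 mum mup sgm sgp p).
Proof.
  intros Hm Hs. split.
  - rewrite fmax4_unfold. unfold valsD.
    unfold Rmax at 1; destruct Rle_dec.
    + unfold Rmax; destruct Rle_dec.
      * exists mup, sgp; repeat split; lra.
      * exists mup, sgm; repeat split; lra.
    + unfold Rmax; destruct Rle_dec.
      * exists mum, sgp; repeat split; lra.
      * exists mum, sgm; repeat split; lra.
  - intros v [mu [s [H1 [H2 ->]]]]. apply box; auto.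
Qed.

Theorem mainTheorem11 (mum mup sgm sgp h0 h1 : R) :
  0 < mum -> mum < mup -> 0 < sgm -> sgm < sgp ->
  exists V : R,
    (forall p : R, exists m, is_max (valsD h0 h1 mum mup sgm sgp p) m) /\
    is_min (fun v => exists p m, is_max (valsD h0 h1 mum mup sgm sgp p) m /\ v = m) V /\
    is_min (fun v => exists p, v = fmax4 h0 h1 mum mup sgm sgp p) V /\
    (forall ab cd : bool * bool, ab <> cd ->
       exists m, is_min (fun w => exists p,
         w = Rmax (fcorner h0 h1 mum mup sgm sgp ab p)
                  (fcorner h0 h1 mum mup sgm sgp cd p)) m) /\
    is_max (fun v => exists ab cd : bool * bool, ab <> cd /\
              is_min (fun w => exists p,
                w = Rmax (fcorner h0 h1 mum mup sgm sgp ab p)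
                         (fcorner h0 h1 mum mup sgm sgp cd p)) v) V.
Proof.
  intros H1 H2 H3 H4.
  set (fc := fcorner h0 h1 mum mup sgm sgp) in *.
  set (g := fmax4 h0 h1 mum mup sgm sgp) in *.
  assert (Hg : forall ab p, fc ab p <= g p) by (intros; apply fc_le).
  destruct (min_exists g) as [ps Hps].
  { intro x. unfold g. cbv beta zeta delta [fmax4]. repeat apply cont_Rmax; apply cont_fc. }
  { destruct (coerc h0 h1 mum mup sgm sgp (false,false) (g 0) H3 H4) as [R0 [HR HR0]].
    exists R0; split; auto. intros x Hx. apply Rle_trans with (fc (false,false) x); [apply HR0; exact Hx| apply Hg]. }
  set (V := g ps).
  assert (Hpair : exists ab cd, ab <> cd /\ forall p, V <= Rmax (fc ab p) (fc cd p)).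
  { apply NNPP; intro Hn.
    assert (Hq : forall ab cd, ab <> cd -> exists p, fc ab p < V /\ fc cd p < V).
    { intros ab cd Hne. apply NNPP; intro Hn2. apply Hn. exists ab, cd; split; auto.
      intro p. apply Rnot_lt_le; intro Hl. apply Hn2. exists p; split.
      - eapply Rle_lt_trans; [apply Rmax_l|exact Hl].
      - eapply Rle_lt_trans; [apply Rmax_r|exact Hl]. }
    destruct (Hq (false,false) (false,true)) as [p12 [A1 A2]]; [congruence|].
    destruct (Hq (false,false) (true,false)) as [p13 [A3 A4]]; [congruence|].
    destruct (Hq (false,false) (true,true)) as [p14 [A5 A6]]; [congruence|].
    destruct (Hq (false,true) (true,false)) as [p23 [A7 A8]]; [congruence|].
    destruct (Hq (false,true) (true,true)) as [p24 [A9 A10]]; [congruence|].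
    destruct (Hq (true,false) (true,true)) as [p34 [A11 A12]]; [congruence|].
    destruct (helly (fc (false,false)) (fc (false,true)) (fc (true,false)) (fc (true,true))
      V p12 p13 p14 p23 p24 p34) as [x [B1 [B2 [B3 B4]]]]; try apply qc_fc; auto.
    assert (g x < V).
    { unfold g, fmax4. repeat apply Rmax_lub_lt; auto. }
    pose proof (Hps x). unfold V in *. lra. }
  exists V. split; [|split; [|split; [|split]]].
  - intro p. exists (g p). apply pmax; auto.
  - split.
    + exists ps, (g ps). split; auto. apply pmax; auto.
    + intros v [p [m [Hm ->]]].
      assert (m = g p).
      { destruct Hm as [Hm1 Hm2]. destruct (pmax h0 h1 mum mup sgm sgp p H2 H4) as [P1 P2].
        apply Rle_antisym; [apply P2; auto| apply Hm2; auto]. }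
      subst. apply Hps.
  - split; [exists ps; reflexivity|]. intros v [p ->]. apply Hps.
  - intros ab cd _.
    destruct (min_exists (fun p => Rmax (fc ab p) (fc cd p))) as [q Hq].
    { intro x. apply cont_Rmax; apply cont_fc. }
    { destruct (coerc h0 h1 mum mup sgm sgp ab (Rmax (fc ab 0) (fc cd 0)) H3 H4) as [R0 [HR HR0]].
      exists R0; split; auto. intros x Hx. apply Rle_trans with (fc ab x); [apply HR0; exact Hx| apply Rmax_l]. }
    exists (Rmax (fc ab q) (fc cd q)). split; [exists q; reflexivity|].
    intros w [p ->]. apply Hq.
  - destruct Hpair as [ab [cd [Hne Hv]]]. split.
    + exists ab, cd. split; auto. split.
      * exists ps. apply Rle_antisym; [apply Hv|].
        apply Rmax_lub; apply Hg.
      * intros w [p ->]. apply Hv.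
    + intros v [a [c [_ [[p Hp] Hmin]]]].
      apply Rle_trans with (Rmax (fc a ps) (fc c ps)).
      * apply Hmin. exists ps; reflexivity.
      * apply Rmax_lub; apply Hg.
Qed.
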